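(* Let $G$ be an infinite group and let $\mu$ be a (not necessarily symmetric) finitely supported generating probability measure on $G$. Then the Laplacian $\Delta_\mu:\mathbb{R}^G\to\mathbb{R}^G$ is surjective.
   Context: $\mu$ is generating if the semigroup generated by $\operatorname{supp}\mu$ is $G$. The Laplacian is defined by $\Delta_\mu f(x)=f(x)-\sum_{s\in\operatorname{supp}\mu}\mu(s)f(xs)$ for $f:G\to\mathbb{R}$. *)

(* Defs.v *)
From Stdlib Require Import Reals List.
Import ListNotations.
Open Scope R_scope.

Record Group := {
  carrier :> Type;
  gmul : carrier -> carrier -> carrier;
  gone : carrier;
  ginv : carrier -> carrier;
  gmulA : forall x y z, gmul x (gmul y z) = gmul (gmul x y) z;
  gmul1l : forall x, gmul gone x = x;
  gmulVl : forall x, gmul (ginv x) x = gone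
}.

Definition infinite_group (G : Group) : Prop :=
  forall l : list G, exists g : G, ~ In g l.

Definition supp {G : Group} (mu : G -> R) (s : G) : Prop := mu s <> 0.

(* S is an exact, duplicate-free enumeration of the support of mu
   (so mu is finitely supported iff such an S exists). *)
Definition enumerates_supp {G : Group} (mu : G -> R) (S : list G) : Prop :=
  NoDup S /\ forall s, In s S <-> supp mu s.

Definition sum_list {G : Group} (S : list G) (F : G -> R) : R :=
  fold_right (fun s acc => F s + acc) 0 S.

Definition fin_prob_measure {G : Group} (mu : G -> R) (S : list G) : Prop :=
  enumerates_supp mu S /\ (forall s, 0 <= mu s) /\ sum_list S mu = 1.

Definition gprod {G : Group} (l : list G) : G := fold_right (gmul G) (gone G) l.

(* mu is generating: the semigroup generated by supp mu is all of G,
   i.e. every element is a product of a nonempty finite word in supp mu. *)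
Definition generating {G : Group} (mu : G -> R) : Prop :=
  forall g : G, exists l : list G,
    l <> [] /\ Forall (supp mu) l /\ gprod l = g.

Definition laplacian {G : Group} (mu : G -> R) (S : list G) (f : G -> R) (x : G) : R :=
  f x - sum_list S (fun s => mu s * f (gmul G x s)).

(* Main.v *)
Require Import Defs.
From Stdlib Require Import Reals List Lra Lia Classical ClassicalEpsilon.
Import ListNotations.
Open Scope R_scope.


Section Grp.
Variable G : Group.
Notation "x * y" := (gmul G x y).
Notation "1" := (gone G).

Lemma mulVr (x : G) : x * ginv G x = 1.
Proof.
  rewrite <- (gmul1l G (x * ginv G x)).
  rewrite <- (gmulVl G (ginv G x)) at 1.
  rewrite <- gmulA. rewrite (gmulA G (ginv G x) x (ginv G x)), gmulVl, gmul1l.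
  apply gmulVl.
Qed.
Lemma mulr1 (x : G) : x * 1 = x.
Proof. rewrite <- (gmulVl G x), gmulA, mulVr, gmul1l. reflexivity. Qed.
Lemma mulcan (a b c : G) : a * b = a * c -> b = c.
Proof. intro H. rewrite <- (gmul1l G b), <- (gmul1l G c), <- (gmulVl G a), <- !gmulA, H. reflexivity. Qed.
Lemma inv_uniq (a b : G) : a * b = 1 -> b = ginv G a.
Proof. intro H. apply (mulcan a). rewrite H, mulVr. reflexivity. Qed.
Lemma invM (a b : G) : ginv G (a * b) = ginv G b * ginv G a.
Proof. symmetry. apply inv_uniq. rewrite gmulA, <- (gmulA G a b), mulVr, mulr1, mulVr. reflexivity. Qed.
Lemma invK (a : G) : ginv G (ginv G a) = a.
Proof. symmetry. apply inv_uniq. apply gmulVl. Qed.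
Lemma inv1 : ginv G 1 = 1.
Proof. symmetry. apply inv_uniq. apply mulr1. Qed.
Lemma mul_eq (x s z : G) : x * s = z <-> x = z * ginv G s.
Proof. split; intro H; subst.
  - rewrite <- gmulA, mulVr, mulr1. reflexivity.
  - rewrite <- gmulA, gmulVl, mulr1. reflexivity. Qed.
End Grp.

Section Main.
Variable G : Group.
Variable mu : G -> R.
Variable Sl : list G.
Hypothesis Hinf : infinite_group G.
Hypothesis Hmu : fin_prob_measure mu Sl.
Hypothesis Hgen : generating mu.
Notation "x ** y" := (gmul G x y) (at level 40, left associativity).

Lemma sum_list_add (l : list G) F H : sum_list l (fun s => F s + H s) = sum_list l F + sum_list l H.
Proof. induction l; simpl; [lra|]. rewrite IHl. lra. Qed.
Lemma sum_list_scal (l : list G) c F : sum_list l (fun s => c * F s) = c * sum_list l F.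
Proof. induction l; simpl; [lra|]. rewrite IHl. lra. Qed.
Lemma sum_list_ext (l : list G) F H : (forall s, In s l -> F s = H s) -> sum_list l F = sum_list l H.
Proof. induction l; simpl; intros E; [lra|]. rewrite E, IHl; auto. Qed.
Lemma sum_list_le (l : list G) A B : (forall s, In s l -> A s <= B s) ->
  sum_list l A <= sum_list l B.
Proof. induction l as [|a l IH]; simpl; intros Hle; [lra|].
  assert (A a <= B a) by auto. assert (sum_list l A <= sum_list l B) by auto. lra. Qed.
Lemma sum_list_le_eq (l : list G) A B : (forall s, In s l -> A s <= B s) ->
  sum_list l A = sum_list l B -> forall s, In s l -> A s = B s.
Proof.
  induction l as [|a l IH]; simpl; intros Hle Heq s Hs; [contradiction|].
  assert (HA : A a <= B a) by auto.
  assert (Hr : sum_list l A <= sum_list l B) by (apply sum_list_le; auto).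
  destruct Hs as [<-|Hs]; [lra|]. apply IH; auto. lra.
Qed.

Lemma exists_max (F : G -> R) (X : list G) (x : G) : In x X ->
  exists x0, In x0 X /\ forall y, In y X -> F y <= F x0.
Proof.
  revert x; induction X as [|a X IH]; simpl; intros x; [tauto|]. intros Hx.
  destruct X as [|b X'].
  - exists a. split; [auto|]. intros y [<-|[]]. lra.
  - destruct (IH b (or_introl eq_refl)) as [x1 [Hx1 Hm]].
    destruct (Rle_dec (F a) (F x1)).
    + exists x1. split; [auto|]. intros y [<-|Hy]; auto.
    + exists a. split; [auto|]. intros y [<-|Hy]; [lra|]. specialize (Hm y Hy). lra.
Qed.

Lemma inS s : In s Sl <-> mu s <> 0.
Proof. destruct Hmu as [[_ H] _]. apply H. Qed.

Lemma maxp (phi : G -> R) (X : list G) :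
  (forall y, phi y <> 0 -> In y X) ->
  (forall z, phi z = sum_list Sl (fun s => mu s * phi (z ** ginv G s))) ->
  forall z, phi z <= 0.
Proof.
  intros Hsupp Heq z0. destruct (Rle_dec (phi z0) 0) as [|Hpos]; [auto|exfalso].
  assert (Hz0 : In z0 X) by (apply Hsupp; lra).
  destruct (exists_max phi X z0 Hz0) as [x0 [Hx0 Hm]].
  set (M := phi x0).
  assert (HM : 0 < M) by (specialize (Hm z0 Hz0); unfold M; lra).
  assert (Hglob : forall y, phi y <= M).
  { intro y. destruct (classic (In y X)) as [Hy|Hy]; [apply Hm; auto|].
    destruct (Req_dec (phi y) 0) as [E|E]; [lra|]. exfalso. auto. }
  destruct Hmu as [_ [Hnn Hsum]].
  assert (Hcl : forall z s, phi z = M -> In s Sl -> phi (z ** ginv G s) = M).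
  { intros z s Hz Hs.
    assert (E : sum_list Sl (fun s => mu s * phi (z ** ginv G s)) = sum_list Sl (fun s => mu s * M)).
    { rewrite <- Heq, Hz.
      replace (sum_list Sl (fun s => mu s * M)) with (sum_list Sl (fun s => M * mu s)).
      - rewrite sum_list_scal. change (sum_list Sl (fun s => mu s)) with (sum_list Sl mu). rewrite Hsum. lra.
      - apply sum_list_ext. intros; lra. }
    pose proof (sum_list_le_eq Sl _ _ (fun s _ => Rmult_le_compat_l _ _ _ (Hnn s) (Hglob (z ** ginv G s))) E s Hs) as E2.
    apply inS in Hs. apply (Rmult_eq_reg_l (mu s)); auto. }
  assert (Hw : forall l, Forall (supp mu) l -> forall z, phi z = M -> phi (z ** ginv G (gprod l)) = M).
  { induction l as [|s l IH]; intros Hl z Hz; simpl.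
    - rewrite inv1, mulr1. auto.
    - inversion Hl; subst. rewrite invM, gmulA. apply Hcl; [apply IH; auto|]. apply inS. auto. }
  destruct (Hinf X) as [y Hy].
  destruct (Hgen (ginv G y ** x0)) as [l [_ [Hl Hp]]].
  pose proof (Hw l Hl x0 eq_refl) as Hyv. rewrite Hp, invM, invK, gmulA, mulVr, gmul1l in Hyv.
  assert (phi y <> 0) by lra. auto.
Qed.


Definition dG (y z : G) : R := if excluded_middle_informative (y = z) then 1 else 0.
Definition rr (x z : G) : R := dG x z - sum_list Sl (fun s => mu s * dG (x ** s) z).
Definition RC (L : list (G * R)) (z : G) : R := fold_right (fun p acc => snd p * rr (fst p) z + acc) 0 L.
Definition RG (g : G -> R) (L : list (G * R)) : R := fold_right (fun p acc => snd p * g (fst p) + acc) 0 L.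
Definition phiL (L : list (G * R)) (y : G) : R := fold_right (fun p acc => snd p * dG (fst p) y + acc) 0 L.

Lemma dG_shift x s z : dG (x ** s) z = dG x (z ** ginv G s).
Proof. unfold dG. destruct (excluded_middle_informative (x ** s = z)) as [E|E];
  destruct (excluded_middle_informative (x = z ** ginv G s)) as [E2|E2]; auto;
  exfalso; [apply E2|apply E]; apply mul_eq; auto. Qed.

Lemma sum_list_zero (l : list G) : sum_list l (fun _ => 0) = 0.
Proof. induction l; simpl; [lra|]. rewrite IHl; lra. Qed.

Lemma RC_phi L z : RC L z = phiL L z - sum_list Sl (fun s => mu s * phiL L (z ** ginv G s)).
Proof.
  induction L as [|[x a] L IH]; simpl.
  - rewrite (sum_list_ext Sl _ (fun _ => 0)); [rewrite sum_list_zero; lra|]. intros; lra.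
  - rewrite IH. unfold rr.
    rewrite (sum_list_ext Sl (fun s => mu s * (a * dG x (z ** ginv G s) + phiL L (z ** ginv G s)))
       (fun s => a * (mu s * dG (x ** s) z) + mu s * phiL L (z ** ginv G s))).
    + rewrite sum_list_add, sum_list_scal. lra.
    + intros s _. rewrite dG_shift. lra.
Qed.

Lemma phi_supp L y : phiL L y <> 0 -> In y (map fst L).
Proof.
  induction L as [|[x a] L IH]; simpl; [lra|]. intros H.
  unfold dG in H. destruct (excluded_middle_informative (x = y)); [auto|].
  right. apply IH. lra.
Qed.

Lemma sum_delta (X : list G) x F : NoDup X -> In x X -> sum_list X (fun y => dG x y * F y) = F x.
Proof.
  induction X as [|b X IH]; simpl; [tauto|]. intros Hnd Hin. inversion Hnd; subst.
  unfold dG at 1. destruct (excluded_middle_informative (x = b)) as [->|Hne].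
  - rewrite (sum_list_ext X _ (fun _ => 0)); [rewrite sum_list_zero; lra|].
    intros y Hy. unfold dG. destruct (excluded_middle_informative (b = y)); [subst; contradiction|lra].
  - destruct Hin as [->|Hin]; [congruence|]. rewrite IH; auto. lra.
Qed.

Lemma RG_phi g L X : NoDup X -> (forall p, In p L -> In (fst p) X) ->
  RG g L = sum_list X (fun y => phiL L y * g y).
Proof.
  induction L as [|[x a] L IH]; simpl; intros Hnd HX.
  - rewrite (sum_list_ext X _ (fun _ => 0)); [rewrite sum_list_zero; lra|]. intros; lra.
  - rewrite IH; auto.
    rewrite (sum_list_ext X (fun y => (a * dG x y + phiL L y) * g y) (fun y => a * (dG x y * g y) + phiL L y * g y)) by (intros; lra).
    rewrite sum_list_add, sum_list_scal, sum_delta; auto.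
    apply (HX (x, a)). auto.
Qed.

Definition Gdec (x y : G) : {x = y} + {x <> y} := excluded_middle_informative (x = y).

Lemma inj g L : (forall z, RC L z = 0) -> RG g L = 0.
Proof.
  intros H0.
  assert (Heq : forall z, phiL L z = sum_list Sl (fun s => mu s * phiL L (z ** ginv G s))).
  { intro z. specialize (H0 z). rewrite RC_phi in H0. lra. }
  assert (Hle : forall z, phiL L z <= 0) by (apply (maxp _ (map fst L)); [apply phi_supp|exact Heq]).
  assert (Hge : forall z, - phiL L z <= 0).
  { apply (maxp (fun y => - phiL L y) (map fst L)).
    - intros y Hy. apply phi_supp. lra.
    - intro z. rewrite (sum_list_ext Sl _ (fun s => -1 * (mu s * phiL L (z ** ginv G s)))) by (intros; lra).
      rewrite sum_list_scal, <- Heq. lra. }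
  rewrite (RG_phi g L (nodup Gdec (map fst L))).
  - rewrite (sum_list_ext _ _ (fun _ => 0)); [apply sum_list_zero|].
    intros y _. specialize (Hle y). specialize (Hge y). replace (phiL L y) with 0 by lra. lra.
  - apply NoDup_nodup.
  - intros p Hp. apply nodup_In. apply in_map. auto.
Qed.


Fixpoint up (n : nat) : nat * nat :=
  match n with O => (O, O) | S n => match up n with (O, b) => (S b, O) | (S a, b) => (a, S b) end end.

Lemma up_all d : forall j, (j <= d)%nat -> exists n, up n = (d - j, j)%nat.
Proof.
  induction d as [|d IHd]; intros j Hj.
  - exists O. replace j with O by lia. reflexivity.
  - induction j as [|j IHj].
    + destruct (IHd d (le_n d)) as [n Hn]. exists (S n). simpl. rewrite Hn.
      replace (d - d)%nat with O by lia. f_equal; lia.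
    + destruct IHj as [n Hn]; [lia|]. exists (S n). simpl. rewrite Hn.
      destruct (S d - j)%nat eqn:E; [lia|]. f_equal; lia.
Qed.

Lemma up_surj a b : exists n, up n = (a, b).
Proof. destruct (up_all (a + b) b) as [n Hn]; [lia|]. exists n. rewrite Hn. f_equal; lia. Qed.

Fixpoint words (k : nat) : list (list G) :=
  match k with O => [[]] | S k => flat_map (fun w => map (fun s => s :: w) Sl) (words k) end.

Lemma in_words l : Forall (fun s => In s Sl) l -> In l (words (length l)).
Proof.
  induction l as [|s l IH]; simpl; intros H; [auto|]. inversion H; subst.
  apply in_flat_map. exists l. split; auto. apply (in_map (fun s0 => s0 :: l)). auto.
Qed.

Definition e (n : nat) : G := let (k, j) := up n in gprod (nth j (words k) []).

Lemma e_surj y : exists n, e n = y.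
Proof.
  destruct (Hgen y) as [l [_ [Hl Hp]]].
  assert (Hin : In l (words (length l))).
  { apply in_words. eapply Forall_impl; [|exact Hl]. intros s Hs. apply inS. exact Hs. }
  destruct (In_nth _ _ [] Hin) as [j [_ Hj]].
  destruct (up_surj (length l) j) as [n Hn]. exists n. unfold e. rewrite Hn, Hj. auto.
Qed.

Definition idx (y : G) : nat := proj1_sig (constructive_indefinite_description _ (e_surj y)).
Lemma e_idx y : e (idx y) = y.
Proof. unfold idx. destruct (constructive_indefinite_description _ (e_surj y)). auto. Qed.

Fixpoint sumN (n : nat) (F : nat -> R) : R := match n with O => 0 | S n => sumN n F + F n end.
Lemma sumN_add n F H : sumN n (fun i => F i + H i) = sumN n F + sumN n H.
Proof. induction n; simpl; [lra|]. rewrite IHn. lra. Qed.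
Lemma sumN_scal n c F : sumN n (fun i => c * F i) = c * sumN n F.
Proof. induction n; simpl; [lra|]. rewrite IHn. lra. Qed.
Lemma sumN_ext n F H : (forall i, (i < n)%nat -> F i = H i) -> sumN n F = sumN n H.
Proof. induction n; simpl; intros E; [lra|]. rewrite IHn, E; auto. Qed.

Lemma RC_app L1 L2 z : RC (L1 ++ L2) z = RC L1 z + RC L2 z.
Proof. induction L1; simpl; [lra|]. unfold RC in *. simpl. rewrite IHL1. lra. Qed.
Lemma RG_app g L1 L2 : RG g (L1 ++ L2) = RG g L1 + RG g L2.
Proof. induction L1; simpl; [lra|]. unfold RG in *. simpl. rewrite IHL1. lra. Qed.
Definition scaleL (c : R) (L : list (G * R)) := map (fun p => (fst p, c * snd p)) L.
Lemma RC_scale c L z : RC (scaleL c L) z = c * RC L z.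
Proof. induction L; simpl; [lra|]. unfold RC in *. simpl. rewrite IHL. lra. Qed.
Lemma RG_scale g c L : RG g (scaleL c L) = c * RG g L.
Proof. induction L; simpl; [lra|]. unfold RG in *. simpl. rewrite IHL. lra. Qed.


Variable g : G -> R.

Definition rep (n : nat) : Prop :=
  exists p : list (G * R) * (nat -> R),
    forall z, dG (e n) z = RC (fst p) z + sumN n (fun i => snd p i * dG (e i) z).

Definition next (n : nat) (w : nat -> R) : R :=
  match excluded_middle_informative (rep n) with
  | left H => let p := proj1_sig (constructive_indefinite_description _ H) in
              RG g (fst p) + sumN n (fun i => snd p i * w i)
  | right _ => 0
  end.

Fixpoint vs (n : nat) : nat -> R :=
  match n with
  | O => fun _ => 0
  | S m => fun i => if Nat.ltb i m then vs m i else next m (vs m)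
  end.

Definition v (n : nat) : R := vs (S n) n.

Lemma v_next n : v n = next n (vs n).
Proof. unfold v. simpl. rewrite Nat.ltb_irrefl. reflexivity. Qed.

Lemma vs_lt m i : (i < m)%nat -> vs m i = v i.
Proof.
  induction m; intros H; [lia|]. simpl.
  destruct (Nat.ltb i m) eqn:E.
  - apply Nat.ltb_lt in E. auto.
  - apply Nat.ltb_ge in E. assert (i = m) by lia. subst. rewrite v_next. reflexivity.
Qed.

Definition Inv (n : nat) : Prop := forall L b,
  (forall z, RC L z + sumN n (fun i => b i * dG (e i) z) = 0) ->
  RG g L + sumN n (fun i => b i * v i) = 0.

Lemma Inv_all n : Inv n.
Proof.
  induction n as [|n IH]; intros L b H; simpl in *.
  - rewrite Rplus_0_r. apply inj. intro z. specialize (H z). lra.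
  - rewrite v_next. unfold next.
    destruct (excluded_middle_informative (rep n)) as [Hr|Hr].
    + destruct (constructive_indefinite_description _ Hr) as [[L0 b0] Hp]. simpl in *.
      set (L' := L ++ scaleL (b n) L0).
      set (b' := fun i => b i + b n * b0 i).
      assert (E := IH L' b').
      unfold L', b' in E. rewrite RG_app, RG_scale in E.
      rewrite (sumN_ext n (fun i => b0 i * vs n i) (fun i => b0 i * v i)) by (intros; rewrite vs_lt; auto).
      rewrite (sumN_ext n (fun i => (b i + b n * b0 i) * v i) (fun i => b i * v i + b n * (b0 i * v i))) in E by (intros; lra).
      rewrite sumN_add, sumN_scal in E.
      assert (Hz : forall z, RC (L ++ scaleL (b n) L0) z +
          sumN n (fun i => (b i + b n * b0 i) * dG (e i) z) = 0).
      { intro z. rewrite RC_app, RC_scale.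
        rewrite (sumN_ext n (fun i => (b i + b n * b0 i) * dG (e i) z) (fun i => b i * dG (e i) z + b n * (b0 i * dG (e i) z))) by (intros; lra).
        rewrite sumN_add, sumN_scal. specialize (H z). specialize (Hp z). rewrite Hp in H. lra. }
      specialize (E Hz). lra.
    + destruct (Req_dec (b n) 0) as [Hb|Hb].
      * rewrite Hb. rewrite Rmult_0_l, Rplus_0_r. apply IH. intro z. specialize (H z). rewrite Hb in H. lra.
      * exfalso. apply Hr. exists (scaleL (- / b n) L, fun i => - / b n * b i). simpl. intro z.
        rewrite RC_scale. rewrite (sumN_ext n _ (fun i => - / b n * (b i * dG (e i) z))) by (intros; lra).
        rewrite sumN_scal. specialize (H z).
        apply (Rmult_eq_reg_l (b n)); auto. field_simplify; auto. lra.
Qed.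


Definition dn (i k : nat) : R := if Nat.eq_dec i k then 1 else 0.

Lemma sumN_delta N k F : (k < N)%nat -> sumN N (fun i => dn i k * F i) = F k.
Proof.
  induction N; intros H; [lia|]. simpl. unfold dn at 2.
  destruct (Nat.eq_dec N k) as [->|Hne].
  - rewrite (sumN_ext k _ (fun _ => 0 * 0)).
    + rewrite sumN_scal. lra.
    + intros i Hi. unfold dn. destruct (Nat.eq_dec i k); [lia|lra].
  - rewrite IHN; [lra|lia].
Qed.

Lemma sumN_swap N (A : nat -> G -> R) :
  sumN N (fun i => sum_list Sl (fun s => A i s)) = sum_list Sl (fun s => sumN N (fun i => A i s)).
Proof.
  induction N; simpl.
  - symmetry. apply sum_list_zero.
  - rewrite IHN, <- sum_list_add. reflexivity.
Qed.

Definition f (y : G) : R := v (idx y).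

Lemma main : forall x, laplacian mu Sl f x = g x.
Proof.
  intro x.
  set (K := idx x :: map (fun s => idx (x ** s)) Sl).
  set (N := S (list_max K)).
  assert (HK : forall k, In k K -> (k < N)%nat).
  { intros k Hk. unfold N. assert (Forall (fun k => k <= list_max K)%nat K) by (apply list_max_le; lia).
    rewrite Forall_forall in H. specialize (H k Hk). lia. }
  set (b := fun i => dn i (idx x) - sum_list Sl (fun s => mu s * dn i (idx (x ** s)))).
  assert (Key : forall F, sumN N (fun i => b i * F i) = F (idx x) - sum_list Sl (fun s => mu s * F (idx (x ** s)))).
  { intro F.
    rewrite (sumN_ext N _ (fun i => dn i (idx x) * F i + -1 * sum_list Sl (fun s => mu s * (dn i (idx (x ** s)) * F i)))).
    - rewrite sumN_add, sumN_scal, sumN_swap, sumN_delta by (apply HK; simpl; auto).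
      rewrite (sum_list_ext Sl _ (fun s => mu s * F (idx (x ** s)))); [lra|].
      intros s Hs. rewrite sumN_scal, sumN_delta; auto. apply HK. simpl. right.
      apply (in_map (fun s => idx (x ** s))). auto.
    - intros i _. unfold b.
      rewrite (sum_list_ext Sl (fun s => mu s * (dn i (idx (x ** s)) * F i)) (fun s => F i * (mu s * dn i (idx (x ** s))))) by (intros; lra).
      rewrite sum_list_scal. lra. }
  pose proof (Inv_all N [(x, 1)] (fun i => - b i)) as E. unfold Inv in E.
  rewrite (sumN_ext N (fun i => - b i * v i) (fun i => -1 * (b i * v i))) in E by (intros; lra).
  rewrite sumN_scal, Key in E.
  unfold laplacian, f. unfold RG in E. cbn [fold_right fst snd] in E.
  assert (E2 : g x + -1 * (v (idx x) - sum_list Sl (fun s => mu s * v (idx (x ** s)))) = 0).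
  { rewrite <- E.
    - lra.
    - intro z. unfold RC. cbn [fold_right fst snd].
      rewrite (sumN_ext N (fun i => - b i * dG (e i) z) (fun i => -1 * (b i * dG (e i) z))) by (intros; lra).
      rewrite sumN_scal, Key, e_idx.
      rewrite (sum_list_ext Sl (fun s => mu s * dG (e (idx (x ** s))) z) (fun s => mu s * dG (x ** s) z)).
      + unfold rr. lra.
      + intros s _. rewrite e_idx. auto. }
  lra.
Qed.

End Main.

Theorem proposition1p6 (G : Group) (mu : G -> R) (S : list G)
  (Hinf : infinite_group G)
  (Hmu : fin_prob_measure mu S)
  (Hgen : generating mu) :
  forall g : G -> R, exists f : G -> R, forall x : G, laplacian mu S f x = g x.
Proof.
  intro g. exists (f G mu S Hmu Hgen g). apply main; auto.
Qed.
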